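(* Let $f(x)$ be a real polynomial of degree $K > 1$ with positive leading coefficient, such that all roots of $f'(x)$ are real. Let $k$ be the number of distinct roots of $f'(x)$ that are not inflection points of $f(x)$, and if $k > 0$ sort them as $\alpha_k < \cdots < \alpha_1$; set $\alpha_0 = +\infty$, $f(\alpha_0) = 1$, $\alpha_{k+1} = -\infty$, $f(\alpha_{k+1}) = (-1)^K$. Say that SIGN holds if $f(\alpha_i)f(\alpha_{i-1}) \leq 0$ for all $i = 1,\ldots,k+1$, and that MULT holds if every root $\beta$ of $f'(x)$ with $\mathrm{ord}_\beta(f'(x)) > 1$ is also a root of $f(x)$. Then: (a) $f(x)$ has only real roots if and only if SIGN and MULT hold; (b) all complex roots of $f(x)$ are real and non-negative if and only if SIGN and MULT hold, all roots of $f'(x)$ are non-negative and $(-1)^Kf(0) \geq 0$; (c) all complex roots of $f(x)$ are real and positive if and only if SIGN and MULT hold, all roots of $f'(x)$ are positive and $(-1)^Kf(0) > 0$.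
   Context: $\mathrm{ord}_\beta(g(x))$ denotes the order of vanishing of the polynomial $g$ at $\beta$. *)

(* Defs.v *)
From HB Require Import structures.
From mathcomp Require Import all_boot all_order all_algebra.
From mathcomp Require Import polyrcf complex.
From mathcomp Require Import boolp reals.
Set Implicit Arguments. Unset Strict Implicit. Unset Printing Implicit Defensive.
Import Order.TTheory GRing.Theory Num.Theory.
Local Open Scope ring_scope.

Definition inflection_point (R : realFieldType) (f : {poly R}) (x : R) : Prop :=
  exists2 e : R, 0 < e &
    forall t s : R, x - e < t < x -> x < s < x + e ->
      (f^`()^`()).[t] * (f^`()^`()).[s] < 0.

Section Alphas.
Variable R : rcfType.
Implicit Types f : {poly R}.

Definition alphas f : seq R :=
  rev [seq x <- rootsR f^`() | `[< ~ inflection_point f x >]].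

(* the sequence f(alpha_0) = 1, f(alpha_1), ..., f(alpha_k),
   f(alpha_{k+1}) = (-1)^K  where K = deg f *)
Definition alpha_values f : seq R :=
  1 :: rcons [seq f.[a] | a <- alphas f] ((-1) ^+ (size f).-1).

Definition SIGN f : Prop :=
  forall i : nat, (i < (size (alphas f)).+1)%N ->
    (alpha_values f)`_i.+1 * (alpha_values f)`_i <= 0.

Definition MULT f : Prop :=
  forall beta : R, root f^`() beta -> (1 < mup beta f^`())%N -> root f beta.
End Alphas.

(* Main.v *)
Require Import Defs.
From HB Require Import structures.
From mathcomp Require Import all_boot all_order all_algebra.
From mathcomp Require Import polyrcf complex polyorder.
From mathcomp Require Import boolp reals.
From mathcomp Require Import ring lra zify.
Import Order.TTheory GRing.Theory Num.Theory.
Local Open Scope ring_scope.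
Section Gen.
Variable R : rcfType.
Implicit Types (p q g h : {poly R}).

Lemma mem_rootsR p x : p != 0 -> (x \in rootsR p) = root p x.
Proof. by move=> p0; rewrite -(roots_on_rootsR p0 x) in_itv. Qed.

Lemma mup_mu p x : p != 0 -> mup x p = \mu_x p.
Proof.
move=> p0; apply/eqP; rewrite eqn_leq mup_leq // root_le_mu // ltnn /=.
by rewrite mup_geq // root_mu.
Qed.

Lemma mup_gt0 p x : p != 0 -> (0 < mup x p)%N = root p x.
Proof. by move=> p0; rewrite mup_mu // mu_gt0. Qed.

Lemma mup_deriv p x : p != 0 -> root p x -> mup x p = (mup x p^`()).+1.
Proof.
move=> p0 rx; have dp0 : p^`() != 0.
  apply: contraTneq rx => dp; have sp : (size p <= 1)%N.
    by move: (size_deriv p); rewrite dp size_poly0 => /esym/eqP; rewrite -subn1 subn_eq0.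
  by rewrite [p]size1_polyC // rootC -polyC_eq0 -size1_polyC.
by rewrite !mup_mu // mu_deriv_root // addn1.
Qed.

Lemma prod_nseq (F : R -> {poly R}) n a :
  \prod_(i <- nseq n a) F i = F a ^+ n.
Proof. by elim: n => [|n IH]; rewrite ?big_nil ?big_cons ?IH ?exprS. Qed.

Lemma odd_sum_count (T : eqType) (u : seq T) (P : pred T) (F : T -> nat) :
  odd (\sum_(b <- u | P b) F b) = odd (count (fun b => P b && odd (F b)) u).
Proof.
elim: u => [|a u IH]; first by rewrite big_nil.
rewrite big_cons /=; case: (P a) => //=; rewrite oddD IH.
by case: (odd (F a)) => //=; rewrite add0n.
Qed.

Lemma sum_count_mem (T : eqType) (u s : seq T) (P : pred T) : uniq u ->
  \sum_(b <- u | P b) count_mem b s = count (fun x => (x \in u) && P x) s.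
Proof.
move=> uu; elim: s => [|a s IH] /=.
  by rewrite big1.
rewrite -IH big_split /=; congr (_ + _)%N.
rewrite big_mkcond /=.
have [au|au] := boolP (a \in u).
  rewrite (bigD1_seq a) //= eqxx big1 => [|b ba]; first by case: (P a).
  by rewrite eq_sym (negbTE ba); case: (P b).
rewrite big1_seq //.
move=> b /andP[_ bu]; case: eqP => [ab|]; last by case: (P b).
by rewrite ab bu in au.
Qed.

Definition sgchg g (x : R) := exists2 e : R, 0 < e &
  forall t s : R, x - e < t < x -> x < s < x + e -> g.[t] * g.[s] < 0.

Lemma near_same_sign h (x : R) : ~~ root h x ->
  exists2 d : R, 0 < d & forall y, `|y - x| < d -> 0 < h.[y] * h.[x].
Proof.
move=> hx; have hx0 : 0 < `|h.[x]| by rewrite normr_gt0.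
have [d d0 Hd] := poly_cont x h hx0.
exists d => // y /Hd; rewrite ltr_distl.
move: hx; rewrite rootE => hx.
case: (ltrgtP h.[x] 0) => [bn|bp|b0]; last by rewrite b0 eqxx in hx.
  by rewrite ltr0_norm // => /andP[h1 h2]; nra.
by rewrite gtr0_norm // => /andP[h1 h2]; nra.
Qed.

Lemma sgchg_odd g x : g != 0 -> (sgchg g x <-> odd (mup x g)).
Proof.
move=> g0; have [m [h /implyP/(_ g0) hx Dg]] := multiplicity_XsubC g x.
have -> : mup x g = m by rewrite Dg mupMr // mup_XsubCX eqxx.
have [d d0 Hd] := @near_same_sign h x hx.
have key t s : `|t - x| < d -> `|s - x| < d ->
   g.[t] * g.[s] = (h.[t] * h.[s]) * ((t - x) * (s - x)) ^+ m /\ 0 < h.[t] * h.[s].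
  move=> /Hd ht /Hd hs; split.
    by rewrite Dg !(hornerM, horner_exp, hornerXsubC) exprMn -!mulrA (mulrCA ((t - x) ^+ m)).
  have := mulr_gt0 ht hs.
  have -> : h.[t] * h.[x] * (h.[s] * h.[x]) = h.[t] * h.[s] * (h.[x] ^+ 2) by ring.
  by rewrite pmulr_lgt0 // exprn_even_gt0 //= -rootE.
split.
  move=> [e e0 He]; apply/negPn/negP => em.
  pose r := Num.min d e / 2.
  have hrd : Num.min d e <= d by rewrite ge_min lexx.
  have hre : Num.min d e <= e by rewrite ge_min lexx orbT.
  have hr0 : 0 < Num.min d e by rewrite lt_min d0 e0.
  have r0 : 0 < r by rewrite /r; lra.
  have hrd' : r < d by rewrite /r; lra.
  have hre' : r < e by rewrite /r; lra.
  clearbody r.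
  have [||k1 k2] := key (x - r) (x + r).
  - by rewrite addrAC subrr add0r normrN gtr0_norm //; lra.
  - by rewrite addrAC subrr add0r gtr0_norm //; lra.
  have hlt : g.[x - r] * g.[x + r] < 0 by apply: He; apply/andP; split; lra.
  move: hlt; rewrite k1 ltNge mulr_ge0 ?ltW //.
  rewrite exprn_even_gt0 // mulf_neq0 ?orbT //; apply/eqP; lra.
move=> om; exists d => // t s /andP[t1 t2] /andP[s1 s2].
have [||k1 k2] := key t s.
- by rewrite ltr0_norm ?subr_lt0 //; lra.
- by rewrite gtr0_norm ?subr_gt0 //; lra.
rewrite k1 pmulr_rlt0 // exprn_odd_lt0 //; nra.
Qed.

Definition lag g x := g^`().[x] ^+ 2 - g.[x] * g^`()^`().[x].

Lemma lagM r h x : lag (('X - r%:P) * h) x = h.[x] ^+ 2 + (x - r) ^+ 2 * lag h x.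
Proof. rewrite /lag !derivE !mul0r !mul1r add0r !(hornerD, hornerM, hornerX, hornerN, hornerC); ring. Qed.

Lemma lagZ c h x : lag (c *: h) x = c ^+ 2 * lag h x.
Proof. rewrite /lag !derivZ !hornerZ; ring. Qed.

Lemma lag_prod t x : 0 <= lag (\prod_(r <- t) ('X - r%:P)) x.
Proof.
elim: t => [|a t IH].
  by rewrite big_nil /lag -polyC1 !derivC !hornerC expr2 !mulr0 subr0.
by rewrite big_cons lagM addr_ge0 ?sqr_ge0 // mulr_ge0 ?sqr_ge0.
Qed.

Lemma lag_prod_gt0 t x : (0 < size t)%N ->
  (\prod_(r <- t) ('X - r%:P)).[x] != 0 -> 0 < lag (\prod_(r <- t) ('X - r%:P)) x.
Proof.
case: t => [|a t] //= _; rewrite big_cons lagM hornerM mulf_eq0 negb_or => /andP[_ hx].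
have h1 : 0 < (\prod_(r <- t) ('X - r%:P)).[x] ^+ 2 by rewrite exprn_even_gt0.
have h2 := mulr_ge0 (sqr_ge0 (x - a)) (lag_prod t x).
lra.
Qed.

Lemma sign_prod (t : seq R) (x : R) :
  0 <= (-1) ^+ count (fun r => x < r) t * \prod_(r <- t) (x - r).
Proof.
elim: t => [|a t IH]; first by rewrite big_nil mulr1 expr0 ler01.
rewrite big_cons /= exprD mulrACA mulr_ge0 //.
by case: ltrP => /= h; rewrite ?expr1 ?expr0; lra.
Qed.

Lemma sign_prod_left (t : seq R) (x : R) : all (fun r => x < r) t ->
  [/\ 0 < (-1) ^+ size t * (\prod_(r <- t) ('X - r%:P)).[x],
      (-1) ^+ size t * (\prod_(r <- t) ('X - r%:P))^`().[x] <= 0 &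
      ((0 < size t)%N -> (-1) ^+ size t * (\prod_(r <- t) ('X - r%:P))^`().[x] < 0)].
Proof.
elim: t => [|a t IH]; first by rewrite big_nil -polyC1 derivC !hornerC expr0 mul1r mulr0; split => //; lra.
move=> /= /andP[xa /IH[A1 A2 _]].
set h := \prod_(r <- t) _ in A1 A2 *.
have B1 : (-1) ^+ (size t).+1 * (\prod_(r <- (a :: t)) ('X - r%:P)).[x] =
   (a - x) * ((-1) ^+ size t * h.[x]) by rewrite big_cons hornerM hornerXsubC exprS; ring.
have B2 : (-1) ^+ (size t).+1 * (\prod_(r <- (a :: t)) ('X - r%:P))^`().[x] =
   - ((-1) ^+ size t * h.[x]) + (a - x) * ((-1) ^+ size t * h^`().[x]).
  by rewrite big_cons derivM derivXsubC mul1r !(hornerD, hornerM, hornerX, hornerN, hornerC) exprS; ring.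
have C : (a - x) * ((-1) ^+ size t * h^`().[x]) <= 0.
  by rewrite mulr_ge0_le0 // subr_ge0 ltW.
rewrite B1 B2; split => [||_]; first by rewrite mulr_gt0 // subr_gt0.
  by lra.
by lra.
Qed.

Lemma real_split (g : {poly R}) :
  (forall z : R[i], root (map_poly (real_complex R) g) z -> z \is Num.real) ->
  exists t : seq R, g = lead_coef g *: \prod_(r <- t) ('X - r%:P).
Proof.
move=> Hg; have [->|g0] := eqVneq g 0.
  by exists [::]; rewrite lead_coef0 scale0r.
have [r Dr] := closed_field_poly_normal (map_poly (real_complex R) g).
exists (map (@complex.Re R) r).
apply: (@map_poly_inj _ _ (real_complex R)).
rewrite [LHS]Dr lead_coef_map map_polyZ rmorph_prod big_map /=.
congr (_ *: _); apply: eq_big_seq => z zr.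
rewrite map_polyXsubC /= RRe_real //; apply: Hg.
rewrite Dr rootZ ?root_prod_XsubC //.
by rewrite lead_coef_eq0 map_poly_eq0.
Qed.

Definition reps (f : {poly R}) (u : seq R) := flatten [seq nseq (mup x f) x | x <- u].

Lemma factor_roots f u : f != 0 -> uniq u ->
  exists g, f = \prod_(r <- reps f u) ('X - r%:P) * g.
Proof.
move=> f0; elim: u => [|y u IH] /=; first by exists f; rewrite /reps big_nil mul1r.
move=> /andP[yu uu]; have [g Dg] := IH uu.
have g0 : g != 0 by apply: contraNneq f0 => g0; rewrite Dg g0 mulr0.
have [m [h /implyP/(_ g0) hy Dh]] := multiplicity_XsubC g y.
have Pny : ~~ root (\prod_(r <- reps f u) ('X - r%:P)) y.
  rewrite root_prod_XsubC; apply: contra yu => /flatten_mapP [x xu].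
  by rewrite mem_nseq => /andP[_ /eqP ->].
have mym : mup y f = m by rewrite Dg mupMr // Dh mupMr // mup_XsubCX eqxx.
exists h; rewrite /reps /= big_cat /= prod_nseq mym [LHS]Dg Dh -/(reps f u).
by rewrite mulrA mulrC mulrA.
Qed.


Lemma last_le (y0 : R) (z : seq R) :
  path (fun a b => b < a) y0 z -> last y0 z <= y0.
Proof.
elim: z y0 => [|y1 z IH] y0 /=; first by rewrite lexx.
by move=> /andP[h /IH l]; apply: le_trans l (ltW h).
Qed.

Lemma roots_between (f : {poly R}) (y0 : R) (z : seq R) :
  path (fun a b => b < a) y0 z ->
  path (fun a b => f.[b] * f.[a] <= 0) y0 z ->
  exists rs : seq R, [/\ uniq rs, all (root f) rs,
     all (fun r => last y0 z <= r <= y0) rs &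
     (count (fun y => f.[y] != 0%R) (y0 :: z) + (f.[y0] == 0%R) <= size rs + 1)%N].
Proof.
elim: z y0 => [|y1 z IH] y0 /=.
  by move=> _ _; exists [::]; split => //; case: eqP.
move=> /andP[lt10 pz] /andP[s10 pz'].
have [rs [u1 a1 a2 c1]] := IH y1 pz pz'.
have ly1 := @last_le y1 z pz.
have a2' : all (fun r => last y1 z <= r <= y0) rs.
  apply/allP => r /(allP a2) /andP[h1 h2]; rewrite h1 /=.
  exact: le_trans h2 (ltW lt10).
have nin : forall r, y1 < r -> r \notin rs.
  move=> r hr; apply/negP => /(allP a2) /andP[_ h]; by rewrite ltNge h in hr.
have [f0|f0] := eqVneq f.[y0] 0.
  exists (y0 :: rs); split => //=.
  - by rewrite nin.
  - by rewrite rootE f0 eqxx.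
  - by rewrite lexx andbT (le_trans ly1 (ltW lt10)).
  - by move: c1 => /=; case: eqP => _ /=; move: (count _ z) (size rs) => a b; clear -a b; lia.
have [f1|f1] := eqVneq f.[y1] 0.
  exists rs; split => //; move: c1 => /=; rewrite f1 eqxx /=; move: (count _ z) (size rs) => a b; clear -a b; lia.
have lt0 : f.[y1] * f.[y0] < 0 by rewrite lt_neqAle s10 mulf_neq0.
have [r /andP[r1 r2] rr] := poly_ivtoo (ltW lt10) lt0.
exists (r :: rs); split => //=.
- by rewrite nin.
- by rewrite rr.
- by rewrite (le_trans ly1 (ltW r1)) (ltW r2).
- move: c1 => /=; rewrite f1 (negbTE f1) /=; move: (count _ z) (size rs) => a b; clear -a b; lia.
Qed.

Lemma count_gt_nth (w : seq R) i : sorted <%R w -> (i < size w)%N ->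
  count (fun x => w`_i < x) w = (size w - i.+1)%N.
Proof.
elim: w i => [|a w IH] i //= sw.
have aw : all (fun x => a < x) w by move: sw; rewrite lt_path_sortedE => /andP[].
have sw' : sorted <%R w by move: sw; rewrite lt_path_sortedE => /andP[].
case: i => [|i] /= hi.
  rewrite ltxx add0n subSS subn0; apply/eqP; rewrite -all_count; exact: aw.
rewrite IH // ?subSS.
have : a < w`_i by apply: (allP aw); rewrite mem_nth.
by move=> h; rewrite ltNge (ltW h).
Qed.

Lemma prod_neg (t : seq R) :
  \prod_(r <- t) (0 - r) = (-1) ^+ size t * \prod_(r <- t) r.
Proof.
elim: t => [|a t IH]; first by rewrite !big_nil expr0 mulr1.
by rewrite !big_cons IH /= exprS; ring.
Qed.

End Gen.

Arguments mem_rootsR {R p x}.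
Arguments mup_mu {R p x}.
Arguments mup_gt0 {R p x}.
Arguments mup_deriv {R p x}.
Arguments sgchg_odd {R g x}.
Arguments lag_prod_gt0 {R t x}.
Arguments sign_prod_left {R t x}.
Arguments real_split {R g}.
Arguments factor_roots {R f u}.
Arguments roots_between {R f y0 z}.
Arguments count_gt_nth {R w i}.
Arguments last_le {R y0 z}.
Arguments lag {R}.
Arguments sign_prod {R}.
Arguments prod_neg {R}.
Arguments sgchg {R}.
Arguments reps {R}.
Arguments lagZ {R}.
Arguments lagM {R}.

Section Main.
Variable R : rcfType.
Variable f : {poly R}.
Hypothesis HK : (1 < (size f).-1)%N.
Hypothesis Hlc : 0 < lead_coef f.
Variable s : seq R.
Hypothesis Hp : f^`() = lead_coef f^`() *: \prod_(r <- s) ('X - r%:P).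

Lemma f_neq0 : f != 0.
Proof. by rewrite -lead_coef_eq0 gt_eqF. Qed.

Lemma size_p : size f^`() = (size f).-1.
Proof. exact: size_deriv. Qed.

Lemma p_neq0 : f^`() != 0.
Proof. by rewrite -size_poly_eq0 size_p; case: (size f).-1 HK. Qed.

Lemma lcp_gt0 : 0 < lead_coef f^`().
Proof.
rewrite lead_coefE size_p coef_deriv.
have -> : ((size f).-1.-1.+1 = (size f).-1)%N by case: (size f).-1 HK.
by rewrite pmulrn_lgt0 ?(ltn_trans _ HK) // -lead_coefE.
Qed.

Lemma size_s : size s = (size f).-2.
Proof.
have := size_p; rewrite {1}Hp size_scale ?gt_eqF ?lcp_gt0 //.
by rewrite size_prod_XsubC => <-.
Qed.

Lemma root_p b : root f^`() b = (b \in s).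
Proof. by rewrite [in LHS]Hp rootZ ?gt_eqF ?lcp_gt0 // root_prod_XsubC. Qed.

Lemma mup_p b : mup b f^`() = count_mem b s.
Proof.
rewrite [in LHS]Hp -mul_polyC mupMr ?mu_prod_XsubC //.
by rewrite rootC gt_eqF ?lcp_gt0.
Qed.

Lemma mem_rootsR_p b : (b \in rootsR f^`()) = (b \in s).
Proof. by rewrite mem_rootsR ?p_neq0 // root_p. Qed.

Lemma pp_neq0 : f^`()^`() != 0.
Proof.
rewrite -size_poly_eq0 size_deriv size_p.
by move: HK; case: (size f).-1 => [|[|n]].
Qed.

Lemma infl_odd b : b \in s ->
  (inflection_point f b <-> ~~ odd (count_mem b s)).
Proof.
move=> bs; have rb : root f^`() b by rewrite root_p.
rewrite -mup_p (mup_deriv p_neq0 rb) /=.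
rewrite negbK -sgchg_odd ?pp_neq0 //.
Qed.

Definition ws := [seq b <- rootsR f^`() | odd (count_mem b s)].

Lemma alphasE : alphas f = rev ws.
Proof.
rewrite /alphas /ws; congr rev; apply: eq_in_filter => b.
rewrite mem_rootsR_p => bs; apply/asboolP/idP.
  by move=> ni; apply/negPn/negP => /(infl_odd _ bs).2.
by move=> ob /(infl_odd _ bs).1; rewrite ob.
Qed.

Lemma ws_sorted : sorted <%R ws.
Proof. by apply: sorted_filter; [exact: lt_trans | exact: sorted_roots]. Qed.

Lemma mem_ws b : (b \in ws) = (b \in s) && odd (count_mem b s).
Proof. by rewrite mem_filter mem_rootsR_p andbC. Qed.

Lemma par (P : pred R) : odd (count P s) = odd (count P ws).
Proof.
have uu : uniq (rootsR f^`()) by exact: uniq_roots.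
have := @sum_count_mem _ _ s P uu.
rewrite (eq_in_count (a2 := P)); last by move=> x xs; rewrite mem_rootsR_p xs.
move=> <-; rewrite odd_sum_count /ws count_filter.
by congr odd; apply: eq_count => x.
Qed.


Section DirA.
Variable t : seq R.
Hypothesis Hf : f = lead_coef f *: \prod_(r <- t) ('X - r%:P).

Lemma size_t : size t = (size f).-1.
Proof. by rewrite [in RHS]Hf size_scale ?gt_eqF // size_prod_XsubC. Qed.

Lemma A_lag x : f.[x] != 0 -> 0 < lag f x.
Proof.
move=> fx; rewrite {1}Hf lagZ mulr_gt0 ?exprn_gt0 //; apply: lag_prod_gt0.
  by rewrite size_t; case: (size f).-1 HK.
by apply: contraNneq fx; rewrite {1}Hf hornerZ => ->; rewrite mulr0.
Qed.

Lemma A_mult : MULT f.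
Proof.
move=> b rb m1; apply/negPn/negP => nfb.
have := A_lag _ nfb; rewrite /lag (rootP rb).
have : root f^`()^`() b.
  rewrite -(mup_gt0 pp_neq0); move: m1; rewrite (mup_deriv p_neq0 rb).
  by move: (mup _ _) => m; clear; lia.
by move/rootP => ->; rewrite expr2 !mul0r mulr0 subrr ltxx.
Qed.

Lemma A_key a : a \in s -> (-1) ^+ count (fun r => a < r) s * f.[a] <= 0.
Proof.
move=> as_; have [f0|f0] := eqVneq f.[a] 0; first by rewrite f0 mulr0.
have L := A_lag _ f0.
have pa : f^`().[a] = 0 by apply/rootP; rewrite root_p.
move: L; rewrite /lag pa expr2 mul0r sub0r oppr_gt0 => L.
set h := \prod_(r <- rem a s) ('X - r%:P).
have Hp2 : f^`() = lead_coef f^`() *: (('X - a%:P) * h).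
  by rewrite {1}Hp (big_rem a).
have pp : f^`()^`().[a] = lead_coef f^`() * \prod_(r <- rem a s) (a - r).
  rewrite {1}Hp2 derivZ derivM derivXsubC hornerZ mul1r hornerD hornerM.
  rewrite hornerXsubC subrr mul0r addr0 horner_prod; congr (_ * _).
  by apply: eq_bigr => r _; rewrite hornerXsubC.
have cnt : count (fun r => a < r) s = count (fun r => a < r) (rem a s).
  by rewrite ((permP (perm_to_rem as_)) _) /= ltxx.
have S := sign_prod (rem a s) a; rewrite -cnt in S.
move: S L; rewrite pp.
move: (count _ s) (\prod_(r <- rem a s) (a - r)) => n P S L.
have ss : (-1) ^+ n * (-1) ^+ n = 1 :> R by rewrite -signr_odd -expr2 sqrr_sign.
move: ss S; move: ((-1) ^+ n) => sg ss S.
have T0 : 0 <= lead_coef f^`() * (sg * P) by apply: mulr_ge0 => //; apply: ltW; apply: lcp_gt0.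
have e : (sg * f.[a]) * (lead_coef f^`() * (sg * P)) =
   (sg * sg) * (f.[a] * (lead_coef f^`() * P)) by ring.
rewrite ss mul1r in e; rewrite -e in L.
move: L T0; move: (sg * f.[a]) (lead_coef f^`() * (sg * P)) => X Y.
by nra.
Qed.

Lemma A_V j : (j <= (size ws).+1)%N -> 0 <= (-1) ^+ j * (alpha_values f)`_j.
Proof.
rewrite /alpha_values alphasE; case: j => [|j] hj /=.
  by rewrite expr0 mul1r ler01.
rewrite nth_rcons size_map size_rev; case: ltnP => hjk.
  rewrite (nth_map 0) ?size_rev // nth_rev //.
  set a := ws`_(size ws - j.+1).
  have aw : a \in ws.
    by rewrite mem_nth //; move: hjk; move: (size ws) => m; clear; lia.
  have as_ : a \in s by move: aw; rewrite mem_ws => /andP[].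
  have K := A_key _ as_.
  have cn : odd (count (fun r => a < r) s) = odd j.
    rewrite par count_gt_nth ?ws_sorted //; last first.
      by move: hjk; move: (size ws) => m; clear; lia.
    by congr odd; move: hjk; move: (size ws) => m; clear; lia.
  have sj : (-1) ^+ (count (fun r => a < r) s) = (-1) ^+ j :> R.
    by rewrite -signr_odd cn signr_odd.
  rewrite sj in K; rewrite exprS -mulrA mulN1r oppr_ge0 //.
have -> : j = size ws by move: hj hjk; move: (size ws) => m; clear; lia.
rewrite eqxx.
have hs : odd (size s) = odd (size ws) by rewrite -!count_predT par.
have -> : (size f).-1 = (size s).+1.
  by rewrite size_s; move: HK; case: (size f).-1.
by rewrite -exprD -signr_odd addSn addnS /= oddD hs addbb expr0 ler01.
Qed.

Lemma A_sign : SIGN f.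
Proof.
move=> i; rewrite alphasE size_rev => hi.
have V1 := A_V _ hi; have V0 := A_V _ (ltnW hi).
rewrite exprS in V1.
have ss : (-1) ^+ i * (-1) ^+ i = 1 :> R by rewrite -signr_odd -expr2 sqrr_sign.
move: V1 V0 ss; move: ((-1) ^+ i) ((alpha_values f)`_i.+1) ((alpha_values f)`_i) => sg x1 x0.
move=> V1 V0 ss; have := mulr_ge0 V1 V0.
have -> : -1 * sg * x1 * (sg * x0) = - ((sg * sg) * (x1 * x0)) by ring.
by rewrite ss mul1r oppr_ge0.
Qed.

Lemma A_f0 : (-1) ^+ (size f).-1 * f.[0] = lead_coef f * \prod_(r <- t) r.
Proof.
rewrite {2}Hf hornerZ horner_prod (eq_bigr (fun r => 0 - r)); last first.
  by move=> r _; rewrite hornerXsubC.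
rewrite prod_neg size_t.
have ss : (-1) ^+ (size f).-1 * (-1) ^+ (size f).-1 = 1 :> R.
  by rewrite -signr_odd -expr2 sqrr_sign.
move: ss; move: ((-1) ^+ (size f).-1) (\prod_(r <- t) r) => sg P ss.
transitivity ((sg * sg) * (lead_coef f * P)); first by ring.
by rewrite ss mul1r.
Qed.

Lemma A_root r : r \in t -> root f r.
Proof. by move=> rt; rewrite {1}Hf rootZ ?gt_eqF // root_prod_XsubC. Qed.

Lemma A_proot x : all (fun r => x < r) t -> ~~ root f^`() x.
Proof.
move=> ax; apply/negP; rewrite {1}Hf derivZ rootZ ?gt_eqF // => /rootP P0.
have [_ _ H3] := sign_prod_left ax.
have : (0 < size t)%N by rewrite size_t; case: (size f).-1 HK.
by move/H3; rewrite P0 mulr0 ltxx.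
Qed.

End DirA.


Section DirB.
Hypothesis HS : SIGN f.
Hypothesis HM : MULT f.

Lemma B1 b : b \in s -> ~~ root f b -> count_mem b s = 1%N.
Proof.
move=> bs nb; have c0 : (0 < count_mem b s)%N by rewrite -has_count has_pred1.
apply/eqP; rewrite eqn_leq c0 andbT leqNgt; apply/negP => c1.
by move: nb; rewrite HM // ?root_p // mup_p.
Qed.

Lemma B2 : count (fun b => ~~ root f b) s = count (fun b => ~~ root f b) ws.
Proof.
have uu : uniq (rootsR f^`()) by exact: uniq_roots.
have := @sum_count_mem _ _ s (fun b => ~~ root f b) uu.
rewrite (eq_in_count (a2 := fun b => ~~ root f b)); last first.
  by move=> x xs; rewrite mem_rootsR_p xs.
move=> <-.
rewrite big_seq_cond (eq_bigr (fun _ => 1%N)); last first.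
  by move=> b /andP[]; rewrite mem_rootsR_p => bs nb; exact: B1.
rewrite -big_seq_cond sum1_count /ws count_filter; apply: eq_in_count => b.
rewrite mem_rootsR_p => bs /=.
by case nb: (root f b) => //=; rewrite B1 // nb.
Qed.

Let M := Num.max (cauchy_bound f) (cauchy_bound f^`()).

Lemma M_gt0 : 0 < M.
Proof. by rewrite lt_max cauchy_bound_gt0. Qed.

Lemma fM : 0 < f.[M].
Proof.
have := @sgp_pinftyP _ (cauchy_bound f) f (ge_cauchy_bound f_neq0) M.
rewrite in_itv /= le_max lexx /= => /(_ isT) e.
by rewrite -sgr_gt0 e /sgp_pinfty gtr0_sg // ltr01.
Qed.

Lemma fmM : 0 < (-1) ^+ (size f).-1 * f.[- M].
Proof.
have := @sgp_minftyP _ (- cauchy_bound f) f (le_cauchy_bound f_neq0) (- M).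
rewrite in_itv /= lerN2 le_max lexx /= => /(_ isT) e.
rewrite -sgr_gt0 sgrM e /sgp_minfty sgrM (gtr0_sg Hlc) mulr1.
by rewrite -signr_odd; case: odd; rewrite ?expr1 ?expr0 ?sgrN1 ?sgr1; lra.
Qed.

Lemma ws_range b : b \in ws -> - cauchy_bound f^`() < b < cauchy_bound f^`().
Proof.
by rewrite mem_filter => /andP[_ /roots_in]; rewrite in_itv.
Qed.

Lemma Lam j : (j <= (size (alphas f)).+1)%N ->
  exists2 l, 0 < l &
    f.[(M :: rcons (alphas f) (- M))`_j] = l * (alpha_values f)`_j.
Proof.
case: j => [|j] hj.
  by exists f.[M]; [exact: fM | rewrite /alpha_values /= mulr1].
rewrite /alpha_values /= !nth_rcons size_map; case: ltnP => hjk.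
  by exists 1 => //; rewrite mul1r (nth_map 0).
have -> : j = size (alphas f).
  by move: hj hjk; move: (size (alphas f)) => m; clear; lia.
rewrite !eqxx; exists ((-1) ^+ (size f).-1 * f.[- M]); first exact: fmM.
by rewrite -signr_odd; case: odd; rewrite ?expr1 ?expr0; ring.
Qed.

Lemma B3 : exists rs : seq R, [/\ uniq rs, all (root f) rs &
   (count (fun a => f.[a] != 0%R) ws + 1 <= size rs)%N].
Proof.
have path1 : path (fun a b => b < a) M (rcons (alphas f) (- M)).
  rewrite path_sortedE; last by move=> x y z h1 h2; exact: lt_trans h2 h1.
  apply/andP; split.
    apply/allP => x; rewrite mem_rcons inE => /orP[/eqP->|].
      by have := M_gt0; lra.
    rewrite alphasE mem_rev => /ws_range /andP[_ h].
    by apply: lt_le_trans h _; rewrite le_max lexx orbT.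
  rewrite alphasE -rev_cons rev_sorted /= lt_path_sortedE ws_sorted andbT.
  apply/allP => x /ws_range /andP[h _]; apply: le_lt_trans h.
  by rewrite lerN2 le_max lexx orbT.
have path2 : path (fun a b => f.[b] * f.[a] <= 0) M (rcons (alphas f) (- M)).
  apply/(pathP 0) => i; rewrite size_rcons => hi.
  have [l1 l1p e1] := Lam _ hi; have [l0 l0p e0] := Lam _ (ltnW hi).
  have e1' : f.[(rcons (alphas f) (- M))`_i] = l1 * (alpha_values f)`_i.+1 := e1.
  rewrite e1' e0.
  have := HS _ hi.
  move: ((alpha_values f)`_i.+1) ((alpha_values f)`_i) => v1 v0 h.
  have -> : l1 * v1 * (l0 * v0) = (l1 * l0) * (v1 * v0) by ring.
  by rewrite pmulr_rle0 // mulr_gt0.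
have [rs [u1 a1 a2 c1]] := roots_between path1 path2.
exists rs; split => //.
have fm0 : f.[- M] != 0.
  by apply: contraTneq fmM => ->; rewrite mulr0 ltxx.
move: c1; rewrite /= -cats1 count_cat /= fm0 (gt_eqF fM) alphasE count_rev /=.
by move: (count _ ws) (size rs) => a b; clear; lia.
Qed.

Lemma B_roots (z : R[i]) : root (map_poly (real_complex R) f) z ->
  exists x, z = real_complex R x /\ root f x.
Proof.
have [rs [u1 a1 c1]] := B3.
have uu : uniq (rootsR f) by exact: uniq_roots.
have sz : (size rs <= size (rootsR f))%N.
  apply: uniq_leq_size => // r rr; rewrite mem_rootsR ?f_neq0 //.
  exact: (allP a1).
have [g Dg] := factor_roots f_neq0 uu.
move: Dg; set t := reps f (rootsR f) => Dg.
have st : (size t = size (rootsR f) + count (fun x => root f x) s)%N.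
  rewrite /t /reps size_flatten /shape -map_comp sumnE big_map.
  rewrite (eq_big_seq (fun x => 1 + count_mem x s)%N); last first.
    move=> x xu; rewrite /= size_nseq (mup_deriv f_neq0) ?mup_p ?add1n //.
    by rewrite -(mem_rootsR f_neq0).
  rewrite big_split /= sum1_size (@sum_count_mem _ _ s xpredT uu).
  congr (_ + _)%N; apply: eq_count => x /=.
  by rewrite andbT mem_rootsR ?f_neq0.
have cnt : (count (fun x => root f x) s + count (fun b => ~~ root f b) ws = size s)%N.
  by rewrite -B2 count_predC.
have C : count (fun b => ~~ root f b) ws = count (fun a => f.[a] != 0%R) ws.
  by apply: eq_count => a; rewrite rootE.
have g0 : g != 0 by apply: contraNneq f_neq0 => g0; rewrite Dg g0 mulr0.
have szf : size f = ((size t).+1 + size g).-1.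
  by rewrite [in LHS]Dg size_mul ?size_prod_XsubC // monic_neq0 ?monic_prod_XsubC.
have ss := size_s.
have sg1 : (size g <= 1)%N.
  move: szf ss st cnt C c1 sz HK.
  move: (size f) (size t) (size g) (size s) (size rs) (size (rootsR f)).
  move: (count _ s) (count (fun b => ~~ root f b) ws) (count (fun a => f.[a] != 0%R) ws).
  move=> a b c n1 n2 n3 n4 n5 n6; clear; lia.
have Dg1 := size1_polyC sg1.
move=> rz; have : root (map_poly (real_complex R) (\prod_(r <- t) ('X - r%:P) * g)) z.
  by rewrite -Dg.
rewrite rmorphM /= rootM => /orP[].
  rewrite rmorph_prod /= (eq_bigr (fun r => 'X - (real_complex R r)%:P)); last first.
    by move=> r _; rewrite map_polyXsubC.
  rewrite -(big_map (real_complex R) xpredT (fun x => 'X - x%:P)) root_prod_XsubC.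
  move=> /mapP [x xt ->]; exists x; split => //.
  move: xt; rewrite /t /reps => /flatten_mapP [y yu].
  by rewrite mem_nseq => /andP[_ /eqP ->]; move: yu; rewrite mem_rootsR ?f_neq0.
rewrite Dg1 map_polyC rootC /= => /eqP [] c0.
by move: g0; rewrite Dg1 c0 eqxx.
Qed.

End DirB.

Lemma E_neg x : (forall b, root f^`() b -> 0 <= b) -> root f x -> x < 0 ->
  (-1) ^+ (size f).-1 * f.[0] < 0.
Proof.
move=> Hb rx x0.
have pos : forall y, y < 0 -> 0 < (-1) ^+ (size f).-1.-1 * f^`().[y].
  move=> y y0.
  have := @sgp_minftyP _ y f^`() _ y.
  rewrite in_itv /= lexx => /(_ _ isT) e.
  rewrite -sgr_gt0 sgrM e /sgp_minfty; last first.
    move=> u; rewrite in_itv /= => uy; apply/negP => /Hb; lra.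
  rewrite sgrM (gtr0_sg lcp_gt0) mulr1 size_p.
  by rewrite -signr_odd; case: odd; rewrite ?expr1 ?expr0 ?sgrN1 ?sgr1; lra.
have hd : forall y, y \in `]x, 0[ -> 0 < ((-1) ^+ (size f).-1.-1 *: f)^`().[y].
  by move=> y; rewrite in_itv /= derivZ hornerZ => /andP[_ y0]; apply: pos.
have h0 : (0:R) \in `]x, 0] by rewrite in_itv /= x0 lexx.
have := derpr hd h0.
rewrite !hornerZ (rootP rx) mulr0 => h.
have -> : (size f).-1 = (size f).-1.-1.+1 by case: (size f).-1 HK.
by rewrite exprS -mulrA mulN1r oppr_lt0.
Qed.

Lemma p_croots (z : R[i]) : root (map_poly (real_complex R) f^`()) z ->
  exists x, z = real_complex R x /\ root f^`() x.
Proof.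
rewrite {1}Hp map_polyZ rootZ; last by rewrite fmorph_eq0 gt_eqF ?lcp_gt0.
rewrite rmorph_prod /= (eq_bigr (fun r => 'X - (real_complex R r)%:P)); last first.
  by move=> r _; rewrite map_polyXsubC.
rewrite -(big_map (real_complex R) xpredT (fun x => 'X - x%:P)) root_prod_XsubC.
by move=> /mapP [x xs ->]; exists x; rewrite root_p.
Qed.

End Main.

Lemma cR_ge0 (R : rcfType) (x : R) : (0 <= real_complex R x) = (0 <= x).
Proof. by rewrite lecE /= eqxx. Qed.

Lemma cR_gt0 (R : rcfType) (x : R) : (0 < real_complex R x) = (0 < x).
Proof. by rewrite ltcE /= eqxx. Qed.


Theorem propositionA3 (R : realType) (f : {poly R}) :
  (1 < (size f).-1)%N ->
  0 < lead_coef f ->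
  (forall z : complex R, root (map_poly (real_complex R) f^`()) z ->
     z \is Num.real) ->
  [/\
   (* (a) *)
   (forall z : complex R, root (map_poly (real_complex R) f) z ->
      z \is Num.real)
     <-> SIGN f /\ MULT f,
   (* (b) *)
   (forall z : complex R, root (map_poly (real_complex R) f) z -> 0 <= z)
     <-> [/\ SIGN f, MULT f,
            (forall z : complex R, root (map_poly (real_complex R) f^`()) z ->
               0 <= z)
          & 0 <= (-1) ^+ (size f).-1 * f.[0]] &
   (* (c) *)
   (forall z : complex R, root (map_poly (real_complex R) f) z -> 0 < z)
     <-> [/\ SIGN f, MULT f,
            (forall z : complex R, root (map_poly (real_complex R) f^`()) z ->
               0 < z)
          & 0 < (-1) ^+ (size f).-1 * f.[0]]].
Proof.
move=> HK Hlc Hcp.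
have [s Hp] := real_split Hcp.
have Bz := B_roots _ _ HK Hlc _ Hp.
have Ar : (forall z : complex R, root (map_poly (real_complex R) f) z ->
     z \is Num.real) -> SIGN f /\ MULT f.
  move=> H; have [t Hf] := real_split H.
  by split; [exact: A_sign _ _ HK Hlc _ Hp _ Hf | exact: A_mult _ _ HK Hlc _ Hf].
have realC : forall x : R, real_complex R x \is Num.real.
  by move=> x; apply/complex_realP; exists x.
split.
- split; first exact: Ar.
  by move=> [HS HM] z /(Bz HS HM) [x [-> _]]; exact: realC.
- split.
  + move=> H.
    have Hr z (rz : root (map_poly (real_complex R) f) z) : z \is Num.real.
      exact: ger0_real (H z rz).
    have [HS HM] := Ar Hr.
    have [t Hf] := real_split Hr.
    have ht r : r \in t -> 0 <= r.
      by move=> rt; rewrite -cR_ge0; apply: H; rewrite fmorph_root (A_root _ _ Hlc _ Hf _ rt).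
    split => //.
      move=> z /(p_croots _ _ HK Hlc _ Hp) [x [-> rx]]; rewrite cR_ge0 leNgt; apply/negP => x0.
      have : all (fun r => x < r) t by apply/allP => r /ht; lra.
      by move/(A_proot _ _ HK Hlc _ Hf); rewrite rx.
    rewrite (A_f0 _ _ Hlc _ Hf); apply: mulr_ge0; first exact: ltW.
    by rewrite big_seq; apply: prodr_ge0 => r; exact: ht.
  + move=> [HS HM Hp0 Hc0] z /(Bz HS HM) [x [-> rx]].
    rewrite cR_ge0 leNgt; apply/negP => x0.
    have Hb : forall b, root f^`() b -> 0 <= b.
      by move=> b rb; rewrite -cR_ge0; apply: Hp0; rewrite fmorph_root.
    have := E_neg _ _ HK Hlc _ Hb rx x0; lra.
- split.
  + move=> H.
    have Hr z (rz : root (map_poly (real_complex R) f) z) : z \is Num.real.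
      exact: gtr0_real (H z rz).
    have [HS HM] := Ar Hr.
    have [t Hf] := real_split Hr.
    have ht r : r \in t -> 0 < r.
      by move=> rt; rewrite -cR_gt0; apply: H; rewrite fmorph_root (A_root _ _ Hlc _ Hf _ rt).
    split => //.
      move=> z /(p_croots _ _ HK Hlc _ Hp) [x [-> rx]]; rewrite cR_gt0 ltNge; apply/negP => x0.
      have : all (fun r => x < r) t by apply/allP => r /ht; lra.
      by move/(A_proot _ _ HK Hlc _ Hf); rewrite rx.
    rewrite (A_f0 _ _ Hlc _ Hf); apply: mulr_gt0 => //.
    by rewrite big_seq; apply: prodr_gt0 => r; exact: ht.
  + move=> [HS HM Hp0 Hc0] z /(Bz HS HM) [x [-> rx]].
    rewrite cR_gt0.
    have Hb : forall b, root f^`() b -> 0 <= b.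
      by move=> b rb; rewrite -cR_ge0 ltW //; apply: Hp0; rewrite fmorph_root.
    have [x0|//|x0] := ltrgtP x 0.
      by have := E_neg _ _ HK Hlc _ Hb rx x0; lra.
    by move/rootP: rx; rewrite x0 => f0; move: Hc0; rewrite f0 mulr0 ltxx.
Qed.
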